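(* Let $b\ge 2$ and $k\ge 1$ be integers, set $B=b^k$, let $m\ge 1$ be an integer with $\gcd(m,b)=1$, and let $r$ be an integer with $0\le r<m$. Let $s\ge 1$ be an integer with $s\equiv r\pmod m$ and $\gcd(s,b)=1$. Define $\omega_s:=\operatorname{ord}_{ms}(B)$ and \[ n_s:=\sum_{j=0}^{s-1} B^{j\omega_s}. \] Then: (1) $n_s\equiv r\pmod{m}$; (2) $\mathsf{s}_B(n_s)=\mathsf{s}_b(n_s)=s$; (3) $s\mid n_s$. In particular, $n_s$ is simultaneously $b$-Niven and $B$-Niven.
   Context: For integers $a$ and $N\ge 1$ with $\gcd(a,N)=1$, $\operatorname{ord}_N(a)$ denotes the least positive integer $\omega$ with $a^\omega\equiv 1\pmod N$ (so $\operatorname{ord}_1(a)=1$). For an integer base $g\ge 2$ and a positive integer $c$ with base-$g$ expansion $c=\sum_{i=0}^{L} d_i g^i$, $d_i\in\{0,1,\dots,g-1\}$, $d_L\neq 0$, the base-$g$ digit sum is $\mathsf{s}_g(c)=\sum_{i=0}^L d_i$. A positive integer $c$ is $g$-Niven if $\mathsf{s}_g(c)\mid c$. *)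

(* Defs.v *)
From mathcomp Require Import all_boot.
Set Implicit Arguments. Unset Strict Implicit. Unset Printing Implicit Defensive.

Definition is_ord (N a w : nat) : Prop :=
  [/\ 0 < w, a ^ w = 1 %[mod N]
    & forall v, 0 < v -> a ^ v = 1 %[mod N] -> w <= v].

(* Base-g digit sum, computed by repeated division; the fuel c suffices since
   c %/ g < c for c > 0 and g >= 2. *)
Fixpoint digsum_aux (fuel g c : nat) : nat :=
  match fuel with
  | 0 => 0
  | fuel'.+1 => if c == 0 then 0 else c %% g + digsum_aux fuel' g (c %/ g)
  end.

Definition digit_sum (g c : nat) : nat := digsum_aux c.+1 g c.

Definition niven (g c : nat) : bool := (0 < c) && (digit_sum g c %| c).

(* Main.v *)
Require Import Defs.
From mathcomp Require Import all_boot.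

Lemma digsum_fuel g (g2 : 1 < g) : forall f1 f2 c, c < f1 -> c < f2 ->
  digsum_aux f1 g c = digsum_aux f2 g c.
Proof.
elim=> [|f1 IH] [|f2] c //= h1 h2.
case: eqP => // /eqP c0; congr (_ + _); apply: IH.
- apply: leq_trans (_ : c <= f1) => //; rewrite ltn_Pdiv // lt0n //.
- apply: leq_trans (_ : c <= f2) => //; rewrite ltn_Pdiv // lt0n //.
Qed.

Lemma digit_sum_step g x y : 1 < g -> x < g ->
  digit_sum g (x + g * y) = x + digit_sum g y.
Proof.
move=> g2 xg; rewrite /digit_sum [in LHS]/=.
case: eqP => [/eqP|/eqP c0].
  rewrite addn_eq0 muln_eq0 => /andP[/eqP-> /orP[/eqP g0|/eqP->]].
    by rewrite g0 in g2.
  by [].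
have e1 : (x + g * y) %% g = x by rewrite addnC mulnC modnMDl modn_small.
have e2 : (x + g * y) %/ g = y.
  rewrite addnC mulnC divnMDl ?(ltnW g2) // divn_small // addn0 //.
rewrite e1 e2; congr (_ + _); apply: digsum_fuel => //.
by rewrite -[X in X < _]e2 ltn_Pdiv // lt0n.
Qed.

Lemma digit_sum_mulX g t y : 1 < g -> digit_sum g (g ^ t * y) = digit_sum g y.
Proof.
move=> g2; elim: t => [|t IH]; first by rewrite mul1n.
by rewrite expnS -mulnA -[g * _]add0n digit_sum_step // ?(ltnW g2).
Qed.

Lemma ds_geom g e s : 1 < g -> 0 < e ->
  digit_sum g (\sum_(0 <= j < s) g ^ (j * e)) = s.
Proof.
move=> g2 e0; elim: s => [|s IH]; first by rewrite big_geq // /digit_sum.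
rewrite big_nat_recl // mul0n expn0.
have -> : \sum_(0 <= i < s) g ^ (i.+1 * e) = g * (g ^ e.-1 * \sum_(0 <= i < s) g ^ (i * e)).
  rewrite mulnA -expnS prednK // big_distrr /=; apply: eq_bigr => i _.
  by rewrite -expnD mulSn.
by rewrite digit_sum_step // digit_sum_mulX // IH.
Qed.

Lemma sum_mod B w N t : B ^ w = 1 %[mod N] ->
  \sum_(0 <= j < t) B ^ (j * w) = t %[mod N].
Proof.
move=> H; elim: t => [|t IH]; first by rewrite big_geq.
rewrite big_nat_recr //= -modnDm IH modnDm -modnDm.
rewrite mulnC expnM -modnXm H modnXm exp1n modnDm addn1 //.
Qed.

Theorem proposition4p1 (b k m r s w : nat) :
  2 <= b -> 1 <= k -> 1 <= m -> coprime m b -> r < m ->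
  1 <= s -> s = r %[mod m] -> coprime s b ->
  is_ord (m * s) (b ^ k) w ->
  let B := b ^ k in
  let n := \sum_(0 <= j < s) B ^ (j * w) in
  [/\ n = r %[mod m],
      digit_sum B n = s /\ digit_sum b n = s,
      s %| n
    & niven b n && niven B n].
Proof.
move=> b2 k1 m1 cmb rm s1 srm csb [w0 Hw _] B n.
have B2 : 1 < B by rewrite /B (leq_trans b2) // -{1}(expn1 b) leq_pexp2l // ltnW.
have nms : n = s %[mod m * s] by apply: sum_mod.
have nm : n = r %[mod m].
  by rewrite -(modn_dvdm n (dvdn_mulr s (dvdnn m))) nms modn_dvdm ?dvdn_mulr.
have ns : s %| n.
  rewrite /dvdn; apply/eqP; move: nms => /(congr1 (modn^~ s)).
  by rewrite !modn_dvdm ?dvdn_mull // modnn.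
have dB : digit_sum B n = s by apply: ds_geom.
have db : digit_sum b n = s.
  rewrite /n /B.
  have -> : \sum_(0 <= j < s) (b ^ k) ^ (j * w) = \sum_(0 <= j < s) b ^ (j * (k * w)).
    by apply: eq_bigr => j _; rewrite -expnM mulnCA mulnA.
  by apply: ds_geom; rewrite // muln_gt0 k1.
have n0 : 0 < n.
  rewrite /n; case: (s) s1 => // s' _.
  by rewrite big_nat_recl // mul0n expn0.
split=> //; by rewrite /niven n0 dB db ns.
Qed.
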